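(* Let $D=0.5$ and let $p_0,p_1,\dots,p_{N_p}$ be the PWM basis functions on $[0,1]$ defined in the context. Then for every $k=1,\dots,N_p$ and every $\tau\in(0,0.5)$, $$-p_k(\tau)=p_k(\tau+0.5).$$
   Context: The PWM basis functions with duty cycle $D\in(0,1)$ are functions of the relative time $\tau\in[0,1]$, defined recursively as follows. Set $p_0(\tau)=1$ on $[0,1]$, and $$p_1(\tau)=\begin{cases}\sqrt3\,\dfrac{2\tau-D}{D}, & 0\le\tau\le D,\\[2mm] \sqrt3\,\dfrac{1+D-2\tau}{1-D}, & D\le\tau\le 1.\end{cases}$$ For $k\ge2$, define $p_k^\star(\tau)=\int_D^\tau p_{k-1}(\tau')\,d\tau'$, then $$\overline p_k(\tau)=p_k^\star(\tau)-\sum_{l=0}^{k-1}p_l(\tau)\int_0^1 p_l(s)\,p_k^\star(s)\,ds,\qquad p_k(\tau)=\frac{\overline p_k(\tau)}{\left(\int_0^1\overline p_k(s)^2\,ds\right)^{1/2}}$$ (Gram–Schmidt orthonormalization in $L^2([0,1])$). For $D=0.5$, $p_1(\tau)=\sqrt3(4\tau-1)$ on $[0,0.5)$ and $p_1(\tau)=\sqrt3(3-4\tau)$ on $[0.5,1]$. *)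

(* Defs.v *)
From Stdlib Require Import Reals List ClassicalEpsilon.
Import ListNotations.
Open Scope R_scope.

(* Oriented Riemann integral of f from a to b (Stdlib's RiemannInt, which is
   independent of the integrability proof); 0 if f is not Riemann integrable
   (never the case for the piecewise-polynomial functions below). *)
Definition Rint (f : R -> R) (a b : R) : R :=
  match excluded_middle_informative (inhabited (Riemann_integrable f a b)) with
  | left H => RiemannInt (epsilon H (fun _ => True))
  | right _ => 0
  end.

Definition pwm_p0 : R -> R := fun _ => 1.

Definition pwm_p1 (D : R) : R -> R := fun tau =>
  if Rle_dec tau D then sqrt 3 * ((2 * tau - D) / D)
  else sqrt 3 * ((1 + D - 2 * tau) / (1 - D)).

(* Given L = [p_0; ...; p_{k-1}], compute p_k (k >= 2):
   p_k^* (tau) = int_D^tau p_{k-1},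
   pbar_k = p_k^* - sum_l p_l <p_l, p_k^*>,  p_k = pbar_k / ||pbar_k||. *)
Definition pwm_next (D : R) (L : list (R -> R)) : R -> R :=
  let pprev := last L (fun _ => 0) in
  let pstar := fun tau => Rint pprev D tau in
  let pbar := fun tau =>
    pstar tau - fold_right (fun pl acc =>
        pl tau * Rint (fun s => pl s * pstar s) 0 1 + acc) 0 L in
  let nrm := sqrt (Rint (fun s => pbar s ^ 2) 0 1) in
  fun tau => pbar tau / nrm.

Fixpoint pwm_list (D : R) (n : nat) : list (R -> R) :=
  match n with
  | O => [pwm_p0]
  | S m =>
      match m with
      | O => [pwm_p0; pwm_p1 D]
      | S _ => let L := pwm_list D m in L ++ [pwm_next D L]
      end
  end.

Definition pwm (D : R) (k : nat) : R -> R := nth k (pwm_list D k) (fun _ => 0).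

(* Main.v *)
Require Import Defs.
From Stdlib Require Import Reals List Lra Lia ClassicalEpsilon.
From Coquelicot Require Import Coquelicot.
Import ListNotations.
Open Scope R_scope.

Definition Cont (f : R -> R) := forall x, continuity_pt f x.
Definition Good (f : R -> R) :=
  Cont f /\ (forall t, 0 <= t <= 1/2 -> f (t + 1/2) = - f t).

Lemma cont_c f x : continuity_pt f x -> continuous f x.
Proof. intro H; now apply continuity_pt_filterlim. Qed.
Lemma c_cont f x : continuous f x -> continuity_pt f x.
Proof. intro H; now apply continuity_pt_filterlim. Qed.

Lemma cont_ex f a b : Cont f -> ex_RInt f a b.
Proof. intro H. apply (@ex_RInt_continuous R_CompleteNormedModule). intros; apply cont_c, H. Qed.

Lemma Rint_RInt f a b : Cont f -> Rint f a b = RInt f a b.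
Proof.
  intro H. unfold Rint.
  destruct excluded_middle_informative as [H1|H1].
  - symmetry; apply RInt_Reals.
  - exfalso; apply H1; constructor; apply ex_RInt_Reals_0; now apply cont_ex.
Qed.

Lemma cont_prim f a : Cont f -> Cont (fun t => RInt f a t).
Proof.
  intros H x. apply c_cont. apply (@ex_derive_continuous R_AbsRing R_NormedModule).
  exists (f x). apply (@is_derive_RInt R_NormedModule f (fun t => RInt f a t) a x).
  - apply filter_forall. intros; apply (RInt_correct f). now apply cont_ex.
  - now apply cont_c.
Qed.
Lemma p1_eq t : pwm_p1 (1/2) t = sqrt 3 * (1 - 4 * Rabs (t - 1/2)).
Proof.
  unfold pwm_p1. destruct (Rle_dec t (1/2)).
  - rewrite Rabs_left1 by lra. field.
  - rewrite Rabs_right by lra. field.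
Qed.

Lemma p1_good : Good (pwm_p1 (1/2)).
Proof.
  split.
  - intro x. apply continuity_pt_ext with (f := fun t => sqrt 3 * (1 - 4 * Rabs (t - 1/2))).
    { intro; now rewrite p1_eq. }
    apply continuity_pt_mult. apply continuity_pt_const; intros ? ?; reflexivity.
    apply continuity_pt_minus. apply continuity_pt_const; intros ? ?; reflexivity.
    apply continuity_pt_mult. apply continuity_pt_const; intros ? ?; reflexivity.
    apply (continuity_pt_comp (fun t => t - 1/2) Rabs).
    apply continuity_pt_minus. apply derivable_continuous_pt, derivable_pt_id.
    apply continuity_pt_const; intros ? ?; reflexivity.
    apply Rcontinuity_abs.
  - intros t Ht. rewrite !p1_eq. rewrite (Rabs_right (t + 1/2 - 1/2)) by lra.
    rewrite (Rabs_left1 (t - 1/2)) by lra. field.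
Qed.

Lemma scal1 (x : R) : scal 1 x = x.
Proof. exact (@scal_one R_Ring R_ModuleSpace x). Qed.
Lemma shift_int p t : Cont p -> (forall s, 0 <= s <= 1/2 -> p (s + 1/2) = - p s) ->
  0 <= t <= 1/2 ->
  RInt p (1/2) (t + 1/2) = RInt p (1/2) 0 - RInt p (1/2) t.
Proof.
  intros Cp Ap Ht.
  assert (E : RInt p (1/2) (t+1/2) = RInt (fun y => scal 1 (p (1*y + 1/2))) 0 t).
  { rewrite (@RInt_comp_lin R_CompleteNormedModule). f_equal; lra. apply cont_ex, Cp. }
  rewrite E.
  rewrite (@RInt_ext R_CompleteNormedModule _ (fun y => opp (p y))).
  2:{ intros x Hx. rewrite Rmin_left in Hx by lra. rewrite Rmax_right in Hx by lra.
      rewrite scal1. replace (1*x+1/2) with (x+1/2) by ring. apply Ap. lra. }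
  rewrite (@RInt_opp R_CompleteNormedModule) by (apply cont_ex, Cp).
  rewrite <- (@RInt_Chasles R_CompleteNormedModule p 0 (1/2) t) by (apply cont_ex, Cp).
  rewrite <- (@opp_RInt_swap R_CompleteNormedModule p 0 (1/2)) by (apply cont_ex, Cp).
  unfold opp, plus; simpl. ring.
Qed.

Lemma mean_int P : Cont P -> (forall t, 0 <= t <= 1/2 -> P (t + 1/2) = P 0 - P t) ->
  RInt P 0 1 = P 0 / 2.
Proof.
  intros Cp Ap.
  rewrite <- (@RInt_Chasles R_CompleteNormedModule P 0 (1/2) 1) by (apply cont_ex, Cp).
  assert (E : RInt P (1/2) 1 = RInt (fun y => scal 1 (P (1*y + 1/2))) 0 (1/2)).
  { rewrite (@RInt_comp_lin R_CompleteNormedModule). f_equal; lra. apply cont_ex, Cp. }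
  rewrite E.
  assert (Cs : Cont (fun y => scal 1 (P (1*y + 1/2)))).
  { intro x. apply continuity_pt_ext with (f := fun y => P (y + 1/2)).
    intro; rewrite scal1; f_equal; lra.
    apply (continuity_pt_comp (fun y => y + 1/2) P).
    apply continuity_pt_plus. apply derivable_continuous_pt, derivable_pt_id.
    apply continuity_pt_const; intros ? ?; reflexivity. apply Cp. }
  rewrite <- (@RInt_plus R_CompleteNormedModule) by (apply cont_ex; auto).
  rewrite (@RInt_ext R_CompleteNormedModule _ (fun _ => P 0)).
  2:{ intros x Hx. rewrite Rmin_left in Hx by lra. rewrite Rmax_right in Hx by lra.
      rewrite scal1. replace (1*x+1/2) with (x+1/2) by ring. rewrite Ap by lra.
      unfold plus; simpl. ring. }
  rewrite (@RInt_const R_CompleteNormedModule). unfold scal; simpl; unfold mult; simpl. field.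
Qed.
Lemma cst_cont (c : R) : Cont (fun _ => c).
Proof. intro; apply continuity_pt_const; intros ? ?; reflexivity. Qed.

Lemma fold_cont (c : (R -> R) -> R) L : List.Forall Cont L ->
  Cont (fun t => fold_right (fun pl acc => pl t * c pl + acc) 0 L).
Proof.
  induction L as [|f L IH]; intros HL; simpl.
  - apply cst_cont.
  - inversion HL; subst. intro x.
    apply continuity_pt_plus; [|now apply IH].
    apply continuity_pt_mult; [apply H1|apply cst_cont].
Qed.

Lemma fold_anti (c : (R -> R) -> R) M : List.Forall Good M -> forall t, 0 <= t <= 1/2 ->
  fold_right (fun pl acc => pl (t + 1/2) * c pl + acc) 0 M =
  - fold_right (fun pl acc => pl t * c pl + acc) 0 M.
Proof.
  induction M as [|f M IH]; intros HM t Ht; simpl.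
  - lra.
  - inversion HM; subst. rewrite IH by auto. destruct H1 as [_ A]. rewrite A by auto. lra.
Qed.

Lemma last_in {A} (M : list A) d : M <> [] -> In (last M d) M.
Proof.
  intro H. destruct (exists_last H) as [l [a E]]. subst. rewrite last_last.
  apply in_or_app; right; left; reflexivity.
Qed.

Lemma next_good M : M <> [] -> List.Forall Good M -> Good (pwm_next (1/2) (pwm_p0 :: M)).
Proof.
  intros HM HG.
  assert (Hp : Good (last (pwm_p0 :: M) (fun _ => 0))).
  { destruct M as [|g M']; [congruence|]. simpl last.
    rewrite List.Forall_forall in HG. apply HG. apply (last_in (g :: M')). discriminate. }
  set (p := last (pwm_p0 :: M) (fun _ => 0)) in *.
  destruct Hp as [Cp Ap].
  set (P := fun t => RInt p (1/2) t).
  assert (HPe : forall t, Rint p (1/2) t = P t) by (intro; now apply Rint_RInt).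
  assert (CP : Cont P) by (apply cont_prim; auto).
  assert (CP' : Cont (fun t => Rint p (1/2) t)).
  { intro x. apply continuity_pt_ext with P. intro; now rewrite HPe. apply CP. }
  assert (AP : forall t, 0 <= t <= 1/2 -> P (t + 1/2) = P 0 - P t).
  { intros; unfold P; now apply shift_int. }
  assert (C0 : Rint (fun s => pwm_p0 s * Rint p (1/2) s) 0 1 = P 0 / 2).
  { rewrite Rint_RInt.
    2:{ intro x. apply continuity_pt_mult. apply cst_cont. apply CP'. }
    rewrite (@RInt_ext R_CompleteNormedModule _ P).
    2:{ intros; unfold pwm_p0; rewrite HPe; lra. }
    now apply mean_int. }
  assert (CG : List.Forall Cont (pwm_p0 :: M)).
  { constructor. apply cst_cont. rewrite List.Forall_forall in *. intros f Hf. apply HG, Hf. }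
  unfold pwm_next. fold p.
  set (n := sqrt _).
  split.
  - intro x. unfold Rdiv. apply continuity_pt_mult; [|apply cst_cont].
    apply continuity_pt_minus. apply CP'.
    apply (fold_cont (fun pl => Rint (fun s => pl s * Rint p (1/2) s) 0 1)). exact CG.
  - intros t Ht. simpl fold_right.
    rewrite (fold_anti (fun pl => Rint (fun s => pl s * Rint p (1/2) s) 0 1)) by auto.
    rewrite C0, !HPe, AP by auto. unfold pwm_p0. rewrite <- Ropp_div. f_equal. set (F := fold_right _ 0 M). lra.
Qed.

Lemma pl_SS m : pwm_list (1/2) (S (S m)) =
  pwm_list (1/2) (S m) ++ [pwm_next (1/2) (pwm_list (1/2) (S m))].
Proof. reflexivity. Qed.

Lemma inv m : exists M, pwm_list (1/2) (S m) = pwm_p0 :: M /\ M <> [] /\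
  List.Forall Good M /\ length M = S m /\ pwm (1/2) (S m) = last M (fun _ => 0).
Proof.
  induction m as [|m IH].
  - exists [pwm_p1 (1/2)]. repeat split; try reflexivity. discriminate.
    constructor; [apply p1_good|constructor].
  - destruct IH as [M [E [HM [HG [HL _]]]]].
    set (x := pwm_next (1/2) (pwm_list (1/2) (S m))).
    exists (M ++ [x]). unfold pwm. rewrite pl_SS. fold x. rewrite E.
    repeat split.
    + intro H. destruct M; simpl in H; discriminate.
    + apply List.Forall_app; split; auto. constructor; [|constructor].
      unfold x; rewrite E. now apply next_good.
    + rewrite length_app, HL. simpl. lia.
    + rewrite last_last. simpl. rewrite <- HL. apply nth_middle.
Qed.

Theorem theorem1 (Np k : nat) (tau : R) :
  (1 <= k)%nat -> (k <= Np)%nat -> 0 < tau < (1/2) ->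
  - pwm (1/2) k tau = pwm (1/2) k (tau + (1/2)).
Proof.
  intros Hk _ Ht. destruct k as [|m]; [lia|].
  destruct (inv m) as [M [_ [HM [HG [_ E]]]]]. rewrite E.
  assert (Hg : Good (last M (fun _ => 0))).
  { rewrite List.Forall_forall in HG. apply HG, last_in, HM. }
  destruct Hg as [_ A]. rewrite A by lra. reflexivity.
Qed.
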